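(* Let $n\ge2$ and $1\le k\le n$. Let ${}^1\mathcal M_n^k$ (resp. ${}^n\mathcal M_n^k$) be the set of monotone permutations $\pi\in S_n$ with $\pi(1)=k$ and $\pi(n)=1$ (resp. $\pi(n)=n$). For $\pi\in{}^1\mathcal M_n^k$ define $\tilde\pi\in S_{n-1}$ by $\tilde\pi(i)=\pi(i)-1$, and for $\pi\in{}^n\mathcal M_n^k$ by $\tilde\pi(i)=\pi(i)$, $i=1,\dots,n-1$. Then $\pi\mapsto\tilde\pi$ is a bijection ${}^1\mathcal M_n^k\to\mathcal M_{n-1}^{k-1}$ (resp. ${}^n\mathcal M_n^k\to\mathcal M_{n-1}^{k}$), and $(-1)^{\operatorname{dr}(\tilde\pi)}=(-1)^{\operatorname{dr}(\pi)+n}$ (resp. $(-1)^{\operatorname{dr}(\tilde\pi)}=(-1)^{\operatorname{dr}(\pi)}$).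
   Context: A permutation $\pi\in S_n$ is monotone if, for each $i=1,\dots,n$, either $\pi(j)<\pi(i)$ for all $j<i$, or $\pi(j)>\pi(i)$ for all $j<i$; in the second case $i$ is called a drop of $\pi$ ($i=1$ is not a drop). $\mathcal M_n^k$ denotes the set of monotone permutations with $\pi(1)=k$, and $\operatorname{dr}(\pi)$ the sum of all drops of $\pi$. *)

(* Defs.v *)
(* Permutations of {1,...,n} are modelled by 'S_n = {perm 'I_n},
   i.e. 0-based: position i (1-based) is the ordinal i-1, value v (1-based) is v-1. *)
From HB Require Import structures.
From mathcomp Require Import all_boot all_order all_algebra all_fingroup.
Set Implicit Arguments. Unset Strict Implicit. Unset Printing Implicit Defensive.

Definition monotone n (p : 'S_n) : bool :=
  [forall i : 'I_n,
     [forall j : 'I_n, (j < i)%N ==> (p j < p i)%N]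
  || [forall j : 'I_n, (j < i)%N ==> (p i < p j)%N]].

Definition is_drop n (p : 'S_n) (i : 'I_n) : bool :=
  (i != 0 :> nat) && [forall j : 'I_n, (j < i)%N ==> (p i < p j)%N].

(* dr(pi) = sum of the drops, drops being counted as 1-based positions. *)
Definition dr n (p : 'S_n) : nat := \sum_(i < n | is_drop p i) i.+1.

Definition Mset n k : {set 'S_n} :=
  [set p : 'S_n | monotone p &&
     [forall i : 'I_n, (i == 0 :> nat) ==> ((p i).+1 == k)]].

Definition M1set n k : {set 'S_n} :=
  [set p in Mset n k | [forall i : 'I_n, (i == n.-1 :> nat) ==> ((p i).+1 == 1)]].

Definition Mnset n k : {set 'S_n} :=
  [set p in Mset n k | [forall i : 'I_n, (i == n.-1 :> nat) ==> ((p i).+1 == n)]].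

(* pi~ for pi in ^1M : pi~(i) = pi(i) - 1, i = 1..n-1 (here n = m.+2).
   Built from the function graph; the default 1 is only used if the graph is
   not injective (which does not happen on ^1M). *)
Definition tilde1 m (p : 'S_m.+2) : 'S_m.+1 :=
  insubd (1%g : 'S_m.+1)
    [ffun i : 'I_m.+1 => inord ((p (widen_ord (leqnSn m.+1) i) : nat) - 1) : 'I_m.+1].

Definition tilden m (p : 'S_m.+2) : 'S_m.+1 :=
  insubd (1%g : 'S_m.+1)
    [ffun i : 'I_m.+1 => inord (p (widen_ord (leqnSn m.+1) i) : nat) : 'I_m.+1].

(* Main.v *)
Require Import Defs.
From HB Require Import structures.
From mathcomp Require Import all_boot all_order all_algebra all_fingroup.
From mathcomp Require Import zify.
Import GRing.Theory.
Set Implicit Arguments.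

Section H.
Variable m : nat.
Local Notation w i := (widen_ord (leqnSn m.+1) i).

Lemma split_ord (x : 'I_m.+2) : x = ord_max \/ exists i, x = w i.
Proof.
case: (unliftP ord_max x) => [j ->|->]; last by left.
by right; exists j; apply: val_inj; exact: lift_max.
Qed.

Lemma forall_restrict (F : 'I_m.+2 -> bool) (i : 'I_m.+1) :
  [forall j : 'I_m.+2, (j < w i)%N ==> F j] =
  [forall j : 'I_m.+1, (j < i)%N ==> F (w j)].
Proof.
apply/forallP/forallP => H j; first exact: (H (w j)).
apply/implyP => hj; case: (split_ord j) => [E|[j' E]]; subst j.
  by move: hj; rewrite /= ltnNge ltnW.
by move/implyP: (H j'); apply.
Qed.

Variables (p : 'S_m.+2) (q : 'S_m.+1) (c : nat).
Hypothesis R : forall i, (p (w i) : nat) = (q i + c)%N.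

Lemma up_eq i : [forall j : 'I_m.+2, (j < w i)%N ==> (p j < p (w i))%N]
  = [forall j : 'I_m.+1, (j < i)%N ==> (q j < q i)%N].
Proof.
rewrite forall_restrict; apply: eq_forallb => j; by rewrite !R ltn_add2r.
Qed.

Lemma down_eq i : [forall j : 'I_m.+2, (j < w i)%N ==> (p (w i) < p j)%N]
  = [forall j : 'I_m.+1, (j < i)%N ==> (q i < q j)%N].
Proof.
rewrite forall_restrict; apply: eq_forallb => j; by rewrite !R ltn_add2r.
Qed.

Lemma drop_eq i : is_drop p (w i) = is_drop q i.
Proof. by rewrite /is_drop down_eq. Qed.

Lemma dr_eq : dr p = (dr q + (is_drop p ord_max) * m.+2)%N.
Proof.
rewrite /dr big_mkcond big_ord_recr /=.
rewrite [X in _ = (X + _)%N]big_mkcond /=; congr (_ + _)%N.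
  by apply: eq_bigr => i _; rewrite drop_eq.
have E : forall b : bool, (if b then m.+2 else 0) = b * m.+2 by case; rewrite ?mul1n.
exact: E.
Qed.

Lemma mono_restr : monotone p -> monotone q.
Proof.
move/forallP => H; apply/forallP => i; move: (H (w i)).
by rewrite up_eq down_eq.
Qed.

Lemma mono_ext : monotone q ->
  (forall j : 'I_m.+2, j != ord_max -> (p j < p ord_max)%N) \/
  (forall j : 'I_m.+2, j != ord_max -> (p ord_max < p j)%N) -> monotone p.
Proof.
move=> /forallP H Hmax; apply/forallP => x.
case: (split_ord x) => [->|[i ->]]; last by rewrite up_eq down_eq.
case: Hmax => Hm; [apply/orP; left | apply/orP; right];
  apply/forallP => j; apply/implyP => hj; apply: Hm;
  by apply: contraTneq hj => ->; rewrite ltnn.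
Qed.
End H.

Section T.
Variable m : nat.
Local Notation w i := (widen_ord (leqnSn m.+1) i).

Lemma w_neq (i : 'I_m.+1) : w i != ord_max.
Proof. by rewrite -val_eqE /= neq_ltn ltn_ord. Qed.

Lemma p_neq (p : 'S_m.+2) (i : 'I_m.+1) : (p (w i) : nat) != p ord_max.
Proof. by rewrite val_eqE (inj_eq perm_inj) w_neq. Qed.

Lemma tilde1E (p : 'S_m.+2) : (p ord_max : nat) = 0 ->
  forall i, (tilde1 p i : nat) = (p (w i) - 1)%N.
Proof.
move=> h0.
have hb : forall i, (p (w i) - 1 < m.+1)%N.
  by move=> i; have := ltn_ord (p (w i)); lia.
have hp : forall i, (0 < p (w i))%N.
  by move=> i; have := p_neq p i; rewrite h0; lia.
have inj : injectiveb [ffun i : 'I_m.+1 => inord ((p (w i) : nat) - 1) : 'I_m.+1].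
  apply/injectiveP => i j; rewrite !ffunE => /(congr1 (@nat_of_ord _)).
  rewrite !inordK // => e.
  have e2 : p (w i) = p (w j) by apply: ord_inj; have := hp i; have := hp j; lia.
  by move/perm_inj: e2 => /(congr1 (@nat_of_ord _)) /= e3; apply: ord_inj.
by move=> i; rewrite /tilde1 -pvalE insubdK // ffunE inordK.
Qed.

Lemma tildenE (p : 'S_m.+2) : (p ord_max : nat) = m.+1 ->
  forall i, (tilden p i : nat) = p (w i).
Proof.
move=> h0.
have hb : forall i, (p (w i) < m.+1)%N.
  by move=> i; have := ltn_ord (p (w i)); have := p_neq p i; rewrite h0; lia.
have inj : injectiveb [ffun i : 'I_m.+1 => inord (p (w i) : nat) : 'I_m.+1].
  apply/injectiveP => i j; rewrite !ffunE => /(congr1 (@nat_of_ord _)).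
  rewrite !inordK // => e.
  have e2 : p (w i) = p (w j) by apply: ord_inj.
  by move/perm_inj: e2 => /(congr1 (@nat_of_ord _)) /= e3; apply: ord_inj.
by move=> i; rewrite /tilden -pvalE insubdK // ffunE inordK.
Qed.
End T.
Local Open Scope ring_scope.
Arguments tilde1E {m p}. Arguments tildenE {m p}. Arguments mono_restr {m p q c}. Arguments dr_eq {m p q c}. Arguments mono_ext {m p q c}.

Lemma first_forall n (P : 'I_n.+1 -> bool) :
  [forall i : 'I_n.+1, (i == 0 :> nat) ==> P i] = P ord0.
Proof.
apply/forallP/idP => [H|H i]; first by move/implyP: (H ord0); apply.
by apply/implyP => /eqP e; have -> : i = ord0 by apply: ord_inj.
Qed.

Lemma last_forall n (P : 'I_n.+1 -> bool) :
  [forall i : 'I_n.+1, (i == n :> nat) ==> P i] = P ord_max.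
Proof.
apply/forallP/idP => [H|H i]; first by move/implyP: (H ord_max); apply.
by apply/implyP => /eqP e; have -> : i = ord_max by apply: ord_inj.
Qed.

Lemma MsetE n k (q : 'S_n.+1) :
  (q \in Mset n.+1 k) = monotone q && ((q ord0).+1 == k)%N.
Proof. by rewrite inE first_forall. Qed.

Lemma M1setE m k (p : 'S_m.+2) :
  (p \in M1set m.+2 k) = [&& monotone p, ((p ord0).+1 == k)%N & ((p ord_max : nat) == 0)%N].
Proof. by rewrite inE MsetE last_forall andbA. Qed.

Lemma MnsetE m k (p : 'S_m.+2) :
  (p \in Mnset m.+2 k) = [&& monotone p, ((p ord0).+1 == k)%N & ((p ord_max : nat) == m.+1)%N].
Proof. by rewrite inE MsetE last_forall eqSS andbA. Qed.

Theorem lemma2p8 (m k : nat) (hk : (1 <= k <= m.+2)%N) :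
  [/\ (forall p, p \in M1set m.+2 k -> forall i : 'I_m.+1,
         (tilde1 p i : nat) = ((p (widen_ord (leqnSn m.+1) i) : nat) - 1)%N),
      {in M1set m.+2 k &, injective (@tilde1 m)},
      (@tilde1 m) @: M1set m.+2 k = Mset m.+1 k.-1
    & forall p, p \in M1set m.+2 k ->
         (-1) ^+ dr (tilde1 p) = (-1) ^+ (dr p + m.+2) :> int]
  /\
  [/\ (forall p, p \in Mnset m.+2 k -> forall i : 'I_m.+1,
         (tilden p i : nat) = (p (widen_ord (leqnSn m.+1) i) : nat)),
      {in Mnset m.+2 k &, injective (@tilden m)},
      (@tilden m) @: Mnset m.+2 k = Mset m.+1 k
    & forall p, p \in Mnset m.+2 k ->
         (-1) ^+ dr (tilden p) = (-1) ^+ (dr p) :> int].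
Proof.
have w0 : widen_ord (leqnSn m.+1) ord0 = ord0 by apply: (@ord_inj m.+2).
have wl : forall i : 'I_m.+1, widen_ord (leqnSn m.+1) i = lift ord_max i.
  by move=> i; apply: ord_inj; rewrite lift_max.
split; split.
- by move=> p; rewrite M1setE => /and3P[_ _ /eqP h0]; exact: tilde1E.
- move=> p1 p2; rewrite !M1setE => /and3P[_ _ /eqP h1] /and3P[_ _ /eqP h2] e.
  apply/permP => x; have [E|[i E]] := split_ord x; rewrite E; apply: ord_inj.
    by rewrite h1 h2.
  have := tilde1E h1 i; have := tilde1E h2 i; rewrite e.
  have := p_neq p1 i; have := p_neq p2 i; rewrite h1 h2; lia.
- apply/setP => q; apply/imsetP/idP => [[p hp ->]|hq].
    move: hp; rewrite M1setE => /and3P[hm /eqP h1 /eqP h0].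
    have R : forall i, (p (widen_ord (leqnSn m.+1) i) : nat) = (tilde1 p i + 1)%N.
      by move=> i; rewrite tilde1E //; have := p_neq p i; rewrite h0; lia.
    rewrite MsetE; apply/andP; split; first exact: mono_restr R hm.
    have := R ord0; rewrite w0 => R0; apply/eqP; lia.
  move: hq; rewrite MsetE => /andP[hm /eqP h1].
  pose p := lift_perm ord_max ord0 q.
  have R : forall i, (p (widen_ord (leqnSn m.+1) i) : nat) = (q i + 1)%N.
    by move=> i; rewrite wl lift_perm_lift lift0 addn1.
  have h0 : p ord_max = ord0 by rewrite lift_perm_id.
  exists p; last first.
    by apply/permP => i; apply: ord_inj; rewrite tilde1E ?h0 // R addnK.
  rewrite M1setE h0 eqxx andbT; apply/andP; split.
    apply: mono_ext R hm _; right => j hj.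
    have H : p j != p ord_max by rewrite (inj_eq perm_inj).
    rewrite h0 lt0n; rewrite h0 in H.
    by move: H; rewrite -val_eqE.
  have := R ord0; rewrite w0 => ->; apply/eqP; lia.
- move=> p; rewrite M1setE => /and3P[hm /eqP h1 /eqP h0].
  have R : forall i, (p (widen_ord (leqnSn m.+1) i) : nat) = (tilde1 p i + 1)%N.
    by move=> i; rewrite tilde1E //; have := p_neq p i; rewrite h0; lia.
  rewrite (dr_eq R).
  have -> : is_drop p ord_max.
    rewrite /is_drop /=; apply/forallP => j; apply/implyP => hj.
    have H : p j != p ord_max.
      by rewrite (inj_eq perm_inj); apply: contraTneq hj => ->; rewrite ltnn.
    have := ltn_ord (p j); move: H; rewrite -val_eqE /= h0; lia.
  have -> : (dr (tilde1 p) + true * m.+2 + m.+2 = dr (tilde1 p) + 2 * m.+2)%N by lia.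
  by rewrite exprD exprM sqrrN !expr1n mulr1.
- by move=> p; rewrite MnsetE => /and3P[_ _ /eqP h0]; exact: tildenE.
- move=> p1 p2; rewrite !MnsetE => /and3P[_ _ /eqP h1] /and3P[_ _ /eqP h2] e.
  apply/permP => x; have [E|[i E]] := split_ord x; rewrite E; apply: ord_inj.
    by rewrite h1 h2.
  by rewrite -(tildenE h1) -(tildenE h2) e.
- apply/setP => q; apply/imsetP/idP => [[p hp ->]|hq].
    move: hp; rewrite MnsetE => /and3P[hm /eqP h1 /eqP h0].
    have R : forall i, (p (widen_ord (leqnSn m.+1) i) : nat) = (tilden p i + 0)%N.
      by move=> i; rewrite tildenE // addn0.
    rewrite MsetE; apply/andP; split; first exact: mono_restr R hm.
    have := R ord0; rewrite w0 => R0; apply/eqP; lia.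
  move: hq; rewrite MsetE => /andP[hm /eqP h1].
  pose p := lift_perm ord_max ord_max q.
  have R : forall i, (p (widen_ord (leqnSn m.+1) i) : nat) = (q i + 0)%N.
    by move=> i; rewrite wl lift_perm_lift lift_max addn0.
  have h0 : p ord_max = ord_max by rewrite lift_perm_id.
  exists p; last first.
    by apply/permP => i; apply: ord_inj; rewrite tildenE ?h0 // R addn0.
  rewrite MnsetE h0 eqxx andbT; apply/andP; split.
    apply: mono_ext R hm _; left => j hj.
    have : (p j : nat) != p ord_max by rewrite val_eqE (inj_eq perm_inj).
    rewrite h0 /=; have := ltn_ord (p j); move=> a b; by rewrite ltn_neqAle b -ltnS a.
  have := R ord0; rewrite w0 => ->; apply/eqP; lia.
- move=> p; rewrite MnsetE => /and3P[hm /eqP h1 /eqP h0].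
  have R : forall i, (p (widen_ord (leqnSn m.+1) i) : nat) = (tilden p i + 0)%N.
    by move=> i; rewrite tildenE // addn0.
  rewrite (dr_eq R).
  have -> : is_drop p ord_max = false.
    apply/negbTE; rewrite /is_drop /= negb_forall; apply/existsP; exists ord0.
    by rewrite /= h0 -leqNgt -ltnS ltn_ord.
  by rewrite mul0n addn0.
Qed.
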